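(* Let $K>0$, $\mu>0$, $h>0$, and $r=h/H\in(0,1)$. Consider the homogeneous controlled patch problem (context) and suppose that, for some $k>0$, $T(x,t)=e^{-Kk^2t}\phi(x)$ is a solution with $\phi\not\equiv0$ even of the form $$\phi(x)=\begin{cases}A\cos kx, & |x|<h/4,\\ C+D\cos[k(x\mp\tfrac h2)]\pm E\sin[k(x\mp \tfrac h2)], & h/4\le \pm x\le 3h/4,\\ B\cos[k(x\mp h)], & 3h/4\le \pm x\le h,\end{cases}$$ with $\phi,\phi'$ continuous and $2h$-periodic. Then $$\cos\frac{kh}{2}\,\sin\frac{kh}{4}\left[\Big(\frac{1-7r^2/48}{1-r^2/48}\Big)\frac{4}{kh}\sin\frac{kh}{4}+\Big(\frac{k^2h^2}{\mu}-1\Big)\cos\frac{kh}{4}\right]=0 .$$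
   Context: Homogeneous controlled patch problem (governing perturbations about an equilibrium). A field $T(x,t)$, $2h$-periodic in $x$, satisfies $T_t=KT_{xx}+\frac{K\mu}{h^2}g(x,T)$, where $g$ is piecewise constant: on the right action region $h/4<x<3h/4$, $g=T_{\mathrm{int}}-\frac2h\int_{h/4}^{3h/4}T\,dx$; on the left action region $-3h/4<x<-h/4$, $g=T_{\mathrm{int}}-\frac2h\int_{-3h/4}^{-h/4}T\,dx$; and $g=0$ on the core $|x|<h/4$ and buffer $3h/4<|x|\le h$. Here $T_c=\frac2h\int_{-h/4}^{h/4}T\,dx$ is the core average and, with $r=h/H$, $$T_{\mathrm{int}}=T_c\,\frac{1-13r^2/48}{1-r^2/48}$$ (this is the action-region average of the parabolic interpolant through zero boundary values at $x=\pm H$ with core average $T_c$). Solutions are understood piecewise, with $T,T_x$ continuous across region boundaries. *)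

(* Defs.v *)
From Stdlib Require Export Reals.
Open Scope R_scope.

Definition is_integral (f : R -> R) (a b v : R) : Prop :=
  exists pr : Riemann_integrable f a b, RiemannInt pr = v.

Definition T_int (h H Tc : R) : R :=
  let r := h / H in Tc * ((1 - 13 * r ^ 2 / 48) / (1 - r ^ 2 / 48)).

(* The piecewise-constant control term g(x,T) at time t, given the integrals
   Ic = int_{-h/4}^{h/4} T, Il = int_{-3h/4}^{-h/4} T, Ir = int_{h/4}^{3h/4} T. *)
Definition g_ctrl (h H x Ic Il Ir : R) : R :=
  let Tc := 2 / h * Ic in
  if Rlt_dec (h / 4) x then
    (if Rlt_dec x (3 * h / 4) then T_int h H Tc - 2 / h * Ir else 0)
  else if Rlt_dec (- (3 * h / 4)) x then
    (if Rlt_dec x (- (h / 4)) then T_int h H Tc - 2 / h * Il else 0)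
  else 0.

Definition region_interior (h x : R) : Prop :=
  - h < x <= h /\ Rabs x <> h / 4 /\ Rabs x <> 3 * h / 4.

(* T solves the homogeneous controlled patch problem
   T_t = K T_xx + (K mu / h^2) g(x,T), 2h-periodic in x, understood piecewise:
   T and T_x exist and are continuous everywhere (across region boundaries),
   and the PDE holds classically in the interior of each region. *)
Definition solves_patch (K mu h H : R) (T : R -> R -> R) : Prop :=
  (forall x t, T (x + 2 * h) t = T x t) /\
  exists Tx : R -> R -> R,
    (forall x t, derivable_pt_lim (fun y => T y t) x (Tx x t)) /\
    (forall x t, continuity_pt (fun y => Tx y t) x) /\
    forall t, exists Ic Il Ir : R,
      is_integral (fun y => T y t) (- (h / 4)) (h / 4) Ic /\
      is_integral (fun y => T y t) (- (3 * h / 4)) (- (h / 4)) Il /\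
      is_integral (fun y => T y t) (h / 4) (3 * h / 4) Ir /\
      forall x, region_interior h x ->
        exists Txx Tt : R,
          derivable_pt_lim (fun y => Tx y t) x Txx /\
          derivable_pt_lim (fun s => T x s) t Tt /\
          Tt = K * Txx + K * mu / h ^ 2 * g_ctrl h H x Ic Il Ir.

(* Main.v *)
Require Import Defs.
From Stdlib Require Import Reals Lra Lia Psatz ZArith.
From Coquelicot Require Import Coquelicot.
From Stdlib Require Import FunctionalExtensionality.
Open Scope R_scope.

Lemma loc_deriv (f g : R -> R) (x l d : R) :
  derivable_pt_lim f x l -> 0 < d -> (forall y, Rabs (y - x) < d -> f y = g y) ->
  derivable_pt_lim g x l.
Proof.
  intros Hf Hd Heq eps Heps.
  destruct (Hf eps Heps) as [del Hdel].
  assert (Hm : 0 < Rmin del d) by (apply Rmin_pos; [apply cond_pos | lra]).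
  exists (mkposreal _ Hm). intros hh Hh0 Hhl. simpl in Hhl.
  rewrite <- (Heq (x + hh)), <- (Heq x).
  - apply Hdel; auto. apply Rlt_le_trans with (1 := Hhl), Rmin_l.
  - rewrite Rminus_diag, Rabs_R0; lra.
  - replace (x + hh - x) with hh by ring. apply Rlt_le_trans with (1 := Hhl), Rmin_r.
Qed.

Lemma match_pt (f g : R -> R) (a : R) :
  continuity_pt f a -> continuity_pt g a ->
  (forall d, 0 < d -> exists y, Rabs (y - a) < d /\ f y = g y) -> f a = g a.
Proof.
  intros Hf Hg H.
  destruct (Req_dec (f a) (g a)) as [e|ne]; auto. exfalso.
  set (eps := Rabs (f a - g a) / 2).
  assert (Heps : 0 < eps) by (unfold eps; apply Rdiv_lt_0_compat; [apply Rabs_pos_lt; lra | lra]).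
  destruct (Hf eps Heps) as [d1 [Hd1 H1]].
  destruct (Hg eps Heps) as [d2 [Hd2 H2]].
  destruct (H (Rmin d1 d2)) as [y [Hy Hfy]]. apply Rmin_pos; lra.
  destruct (Req_dec y a) as [ya|ya]. { subst; contradiction. }
  assert (A1 := H1 y). assert (A2 := H2 y). simpl in A1, A2. unfold R_dist, D_x, no_cond in A1, A2.
  assert (B1 : Rabs (f y - f a) < eps). { apply A1. split; [split; auto|]. apply Rlt_le_trans with (1 := Hy), Rmin_l. }
  assert (B2 : Rabs (g y - g a) < eps). { apply A2. split; [split; auto|]. apply Rlt_le_trans with (1 := Hy), Rmin_r. }
  rewrite Hfy in B1.
  assert (Rabs (f a - g a) <= Rabs (g y - f a) + Rabs (g y - g a)).
  { replace (f a - g a) with (-(g y - f a) + (g y - g a)) by ring.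
    eapply Rle_trans; [apply Rabs_triang|]. rewrite Rabs_Ropp. lra. }
  unfold eps in *. lra.
Qed.

Lemma cont_of_ex (f : R -> R) x : ex_derive f x -> continuity_pt f x.
Proof. intro H. apply derivable_continuous_pt, ex_derive_Reals_0, H. Qed.

Lemma per_nat (f : R -> R) p : (forall x, f (x + p) = f x) ->
  forall n x, f (x + INR n * p) = f x.
Proof.
  intros Hp n. induction n as [|n IH]; intro x.
  - simpl. f_equal. ring.
  - rewrite S_INR. replace (x + (INR n + 1) * p) with ((x + INR n * p) + p) by ring.
    rewrite Hp. apply IH.
Qed.

Lemma per_Z (f : R -> R) p : (forall x, f (x + p) = f x) ->
  forall m x, f (x + IZR m * p) = f x.
Proof.
  intros Hp m x. destruct (Z_le_gt_dec 0 m) as [Hm|Hm].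
  - rewrite <- (Z2Nat.id m Hm), <- INR_IZR_INZ. apply per_nat; auto.
  - replace m with (- Z.of_nat (Z.to_nat (- m)))%Z by lia.
    rewrite opp_IZR, <- INR_IZR_INZ.
    set (y := x + - INR (Z.to_nat (- m)) * p).
    rewrite <- (per_nat f p Hp (Z.to_nat (-m)) y). f_equal. unfold y; ring.
Qed.

Theorem mainTheorem2 (K mu h H k A B C D E : R) (phi : R -> R)
  (hK : 0 < K) (hmu : 0 < mu) (hh : 0 < h) (hr : 0 < h / H < 1) (hk : 0 < k)
  (hcore : forall x, Rabs x < h / 4 -> phi x = A * cos (k * x))
  (hactR : forall x, h / 4 <= x <= 3 * h / 4 ->
     phi x = C + D * cos (k * (x - h / 2)) + E * sin (k * (x - h / 2)))
  (hactL : forall x, h / 4 <= - x <= 3 * h / 4 ->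
     phi x = C + D * cos (k * (x + h / 2)) - E * sin (k * (x + h / 2)))
  (hbufR : forall x, 3 * h / 4 <= x <= h -> phi x = B * cos (k * (x - h)))
  (hbufL : forall x, 3 * h / 4 <= - x <= h -> phi x = B * cos (k * (x + h)))
  (hnz : exists x, phi x <> 0)
  (hsol : solves_patch K mu h H (fun x t => exp (- (K * k ^ 2 * t)) * phi x)) :
  let r := h / H in
  cos (k * h / 2) * sin (k * h / 4) *
    ((1 - 7 * r ^ 2 / 48) / (1 - r ^ 2 / 48) * (4 / (k * h)) * sin (k * h / 4)
     + (k ^ 2 * h ^ 2 / mu - 1) * cos (k * h / 4)) = 0.
Proof.
  intros r.
  destruct hsol as [Hper [Tx [HTx [HTxc Ht]]]].
  assert (e0 : exp (- (K * k ^ 2 * 0)) = 1).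
  { replace (- (K * k ^ 2 * 0)) with 0 by ring. apply exp_0. }
  assert (Hperphi : forall x, phi (x + 2 * h) = phi x).
  { intro x. specialize (Hper x 0). cbv beta in Hper. rewrite e0 in Hper. lra. }
  assert (HTx0 : forall x, derivable_pt_lim phi x (Tx x 0)).
  { intro x. specialize (HTx x 0). cbv beta in HTx. rewrite e0 in HTx.
    apply (loc_deriv _ _ _ _ 1 HTx); [lra | intros; ring]. }
  set (s := sin (k * h / 4)). set (c := cos (k * h / 4)).
  set (fA := fun y => A * cos (k * y)).
  set (dA := fun y => - (A * k * sin (k * y))).
  set (fR := fun y => C + D * cos (k * (y - h / 2)) + E * sin (k * (y - h / 2))).
  set (dR := fun y => - (D * k * sin (k * (y - h / 2))) + E * k * cos (k * (y - h / 2))).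
  set (dB := fun y => - (B * k * sin (k * (y - h)))).
  assert (DA : forall y, derivable_pt_lim fA y (dA y)).
  { intro y. apply is_derive_Reals. unfold fA, dA. auto_derive; auto. unfold Rminus; ring. }
  assert (DR : forall y, derivable_pt_lim fR y (dR y)).
  { intro y. apply is_derive_Reals. unfold fR, dR. auto_derive; auto. unfold Rminus; ring. }
  assert (DB : forall y, derivable_pt_lim (fun y => B * cos (k * (y - h))) y (dB y)).
  { intro y. apply is_derive_Reals. unfold dB. auto_derive; auto. unfold Rminus; ring. }
  assert (DDR : forall y, derivable_pt_lim dR y
     (- (D * k ^ 2 * cos (k * (y - h / 2))) - E * k ^ 2 * sin (k * (y - h / 2)))).
  { intro y. apply is_derive_Reals. unfold dR. auto_derive; auto. unfold Rminus; ring. }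
  assert (HTxA : forall y, 0 < y < h / 4 -> Tx y 0 = dA y).
  { intros y Hy. apply (uniqueness_limite phi y); auto.
    apply (loc_deriv fA _ _ _ (Rmin y (h/4 - y))); auto. apply Rmin_pos; lra.
    intros z Hz. symmetry. apply hcore.
    assert (Rmin y (h/4 - y) <= y) by apply Rmin_l.
    assert (Rmin y (h/4 - y) <= h/4 - y) by apply Rmin_r.
    apply Rabs_def1; apply Rabs_def2 in Hz; lra. }
  assert (HTxR : forall y, h / 4 < y < 3 * h / 4 -> Tx y 0 = dR y).
  { intros y Hy. apply (uniqueness_limite phi y); auto.
    apply (loc_deriv fR _ _ _ (Rmin (y - h/4) (3*h/4 - y))); auto. apply Rmin_pos; lra.
    intros z Hz. symmetry. apply hactR.
    assert (Rmin (y - h/4) (3*h/4 - y) <= y - h/4) by apply Rmin_l.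
    assert (Rmin (y - h/4) (3*h/4 - y) <= 3*h/4 - y) by apply Rmin_r.
    apply Rabs_def2 in Hz; lra. }
  assert (HTxB : forall y, 3 * h / 4 < y < h -> Tx y 0 = dB y).
  { intros y Hy. apply (uniqueness_limite phi y); auto.
    apply (loc_deriv _ _ _ _ (Rmin (y - 3*h/4) (h - y)) (DB y)). apply Rmin_pos; lra.
    intros z Hz. symmetry. apply hbufR.
    assert (Rmin (y - 3*h/4) (h - y) <= y - 3*h/4) by apply Rmin_l.
    assert (Rmin (y - 3*h/4) (h - y) <= h - y) by apply Rmin_r.
    apply Rabs_def2 in Hz; lra. }
  assert (t1 : k * (h / 4) = k * h / 4) by field.
  assert (t2 : k * (h / 4 - h / 2) = - (k * h / 4)) by field.
  assert (t3 : k * (3 * h / 4 - h / 2) = k * h / 4) by field.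
  assert (t4 : k * (3 * h / 4 - h) = - (k * h / 4)) by field.
  assert (E1 : A * c - C - D * c + E * s = 0).
  { assert (Hv : phi (h/4) = fA (h/4)).
    { apply match_pt.
      - apply derivable_continuous_pt. exists (Tx (h/4) 0). apply HTx0.
      - apply derivable_continuous_pt. exists (dA (h/4)). apply DA.
      - intros d Hd. exists (h/4 - Rmin d (h/4) / 2).
        assert (Rmin d (h/4) <= d) by apply Rmin_l.
        assert (Rmin d (h/4) <= h/4) by apply Rmin_r.
        assert (0 < Rmin d (h/4)) by (apply Rmin_pos; lra).
        split. { apply Rabs_def1; lra. } apply hcore. apply Rabs_def1; lra. }
    rewrite hactR in Hv by lra. unfold fA in Hv.
    rewrite t1, t2, cos_neg, sin_neg in Hv. fold s c in Hv. lra. }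
  assert (E2 : A * s + D * s + E * c = 0).
  { assert (Hd : dA (h/4) = dR (h/4)).
    { transitivity (Tx (h/4) 0).
      - symmetry. apply (match_pt (fun y => Tx y 0)).
        + apply HTxc.
        + apply derivable_continuous_pt. exists (- (A * k ^ 2 * cos (k * (h/4)))).
          apply is_derive_Reals. unfold dA. auto_derive; auto. unfold Rminus; ring.
        + intros d Hd. exists (h/4 - Rmin d (h/4) / 2).
          assert (Rmin d (h/4) <= d) by apply Rmin_l.
          assert (Rmin d (h/4) <= h/4) by apply Rmin_r.
          assert (0 < Rmin d (h/4)) by (apply Rmin_pos; lra).
          split. { apply Rabs_def1; lra. } apply HTxA. lra.
      - apply (match_pt (fun y => Tx y 0)).
        + apply HTxc.
        + apply derivable_continuous_pt. eexists. apply DDR.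
        + intros d Hd. exists (h/4 + Rmin d (h/4) / 2).
          assert (Rmin d (h/4) <= d) by apply Rmin_l.
          assert (Rmin d (h/4) <= h/4) by apply Rmin_r.
          assert (0 < Rmin d (h/4)) by (apply Rmin_pos; lra).
          split. { apply Rabs_def1; lra. } apply HTxR. lra. }
    unfold dA, dR in Hd. rewrite t1, t2, cos_neg, sin_neg in Hd. fold s c in Hd.
    assert (k * (A * s + D * s + E * c) = 0) by (rewrite <- (Rplus_opp_r 0) at 1; nra).
    apply Rmult_integral in H0. destruct H0; [lra | auto]. }
  assert (E4 : - (D * s) + E * c - B * s = 0).
  { assert (Hd : dR (3*h/4) = dB (3*h/4)).
    { transitivity (Tx (3*h/4) 0).
      - symmetry. apply (match_pt (fun y => Tx y 0)).
        + apply HTxc.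
        + apply derivable_continuous_pt. eexists. apply DDR.
        + intros d Hd. exists (3*h/4 - Rmin d (h/4) / 2).
          assert (Rmin d (h/4) <= d) by apply Rmin_l.
          assert (Rmin d (h/4) <= h/4) by apply Rmin_r.
          assert (0 < Rmin d (h/4)) by (apply Rmin_pos; lra).
          split. { apply Rabs_def1; lra. } apply HTxR. lra.
      - apply (match_pt (fun y => Tx y 0)).
        + apply HTxc.
        + apply derivable_continuous_pt. exists (- (B * k ^ 2 * cos (k * (3*h/4 - h)))).
          apply is_derive_Reals. unfold dB. auto_derive; auto. unfold Rminus; ring.
        + intros d Hd. exists (3*h/4 + Rmin d (h/4) / 2).
          assert (Rmin d (h/4) <= d) by apply Rmin_l.
          assert (Rmin d (h/4) <= h/4) by apply Rmin_r.
          assert (0 < Rmin d (h/4)) by (apply Rmin_pos; lra).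
          split. { apply Rabs_def1; lra. } apply HTxB. lra. }
    unfold dR, dB in Hd. rewrite t3, t4, sin_neg in Hd. fold s c in Hd.
    assert (k * (- (D * s) + E * c - B * s) = 0) by nra.
    apply Rmult_integral in H0. destruct H0; [lra | auto]. }
  assert (E3 : C + D * c + E * s - B * c = 0).
  { assert (Hv := hactR (3*h/4) ltac:(lra)). rewrite hbufR in Hv by lra.
    rewrite t3, t4, cos_neg in Hv. fold s c in Hv. lra. }
  destruct (Ht 0) as [Ic [Il [Ir [HIc [HIl [HIr Hpde]]]]]].
  assert (HIcv : Ic = 2 * A * s / k).
  { destruct HIc as [pr Hc]. rewrite <- RInt_Reals in Hc. rewrite <- Hc.
    rewrite (RInt_ext _ fA).
    2:{ intros x Hx. rewrite e0, Rmult_1_l. apply hcore.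
        rewrite Rmin_left, Rmax_right in Hx by lra. apply Rabs_def1; lra. }
    assert (HI := is_RInt_derive (fun y => A * sin (k * y) / k) fA (-(h/4)) (h/4)
      ltac:(intros x _; unfold fA; auto_derive; auto; field; lra)
      ltac:(intros x _; apply continuity_pt_filterlim; apply cont_of_ex; unfold fA; auto_derive; auto)).
    rewrite (is_RInt_unique _ _ _ _ HI).
    unfold minus, plus, opp; simpl.
    assert (tt : k * - (h/4) = - (k * h / 4)) by field. rewrite tt.
    rewrite t1, sin_neg. fold s. field. lra. }
  assert (HIrv : Ir = C * h / 2 + 2 * D * s / k).
  { destruct HIr as [pr Hc]. rewrite <- RInt_Reals in Hc. rewrite <- Hc.
    rewrite (RInt_ext _ fR).
    2:{ intros x Hx. rewrite e0, Rmult_1_l. apply hactR.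
        rewrite Rmin_left, Rmax_right in Hx by lra. lra. }
    set (F := fun y => C * y + D * sin (k * (y - h/2)) / k - E * cos (k * (y - h/2)) / k).
    assert (HI := is_RInt_derive F fR (h/4) (3*h/4)
      ltac:(intros x _; unfold F, fR; auto_derive; auto; unfold Rminus; field; lra)
      ltac:(intros x _; apply continuity_pt_filterlim; apply cont_of_ex; unfold fR; auto_derive; auto)).
    rewrite (is_RInt_unique _ _ _ _ HI).
    unfold minus, plus, opp; simpl. unfold F.
    rewrite t2, t3, sin_neg, cos_neg. fold s c. field. lra. }
  assert (Hint : region_interior h (h/2)).
  { unfold region_interior. rewrite Rabs_right by lra. split; [lra | split; intro; lra]. }
  destruct (Hpde (h/2) Hint) as [Txx [Tt [HTxx [HTt Heq]]]].
  assert (phi2 : phi (h/2) = C + D).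
  { rewrite hactR by lra. replace (k*(h/2-h/2)) with 0 by ring. rewrite cos_0, sin_0; ring. }
  assert (HTtv : Tt = - (K*k^2) * (C + D)).
  { apply (uniqueness_limite (fun s0 => exp (-(K*k^2*s0)) * phi (h/2)) 0); auto.
    apply is_derive_Reals. rewrite phi2. auto_derive; auto.
    replace (- (K * (k * (k * 1)) * 0)) with 0 by ring. rewrite exp_0. ring. }
  assert (HTxxv : Txx = - (D * k^2)).
  { apply (uniqueness_limite (fun y => Tx y 0) (h/2)); auto.
    apply (loc_deriv dR _ _ _ (h/4)).
    - replace (-(D*k^2)) with (-(D*k^2*cos(k*(h/2-h/2))) - E*k^2*sin(k*(h/2-h/2)))
        by (replace (k*(h/2-h/2)) with 0 by ring; rewrite cos_0, sin_0; ring). apply DDR.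
    - lra.
    - intros z Hz. symmetry. apply HTxR. apply Rabs_def2 in Hz; lra. }
  unfold g_ctrl in Heq.
  destruct (Rlt_dec (h/4) (h/2)); [|lra]. destruct (Rlt_dec (h/2) (3*h/4)); [|lra].
  cbv beta zeta delta [T_int] in Heq. fold r in Heq.
  set (rho := (1 - 13 * r ^ 2 / 48) / (1 - r ^ 2 / 48)) in Heq.
  rewrite HTtv, HTxxv, HIcv, HIrv in Heq.
  set (q := 4 / (k * h)). set (m := k ^ 2 * h ^ 2 / mu).
  assert (E5 : rho*q*A*s - C - q*D*s + m*C = 0).
  { assert (Hx : K*mu/h^2 * (rho*q*A*s - C - q*D*s + m*C) =
       -(-(K*k^2)*(C+D) - (K*(-(D*k^2)) + K*mu/h^2*(2/h*(2*A*s/k)*rho - 2/h*(C*h/2 + 2*D*s/k))))).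
    { unfold q, m. field. repeat split; lra. }
    rewrite Heq in Hx. unfold Rminus in Hx. rewrite Rplus_opp_r, Ropp_0 in Hx.
    apply Rmult_integral in Hx. destruct Hx as [Hx|Hx]; auto.
    exfalso. assert (0 < K*mu/h^2). { apply Rdiv_lt_0_compat; [nra | apply pow_lt; lra]. }
    lra. }
  assert (Hr0 : 0 < r < 1) by (unfold r; lra).
  assert (Hrho : (1 - 7*r^2/48)/(1 - r^2/48) = (1+rho)/2).
  { unfold rho. field. nra. }
  rewrite Hrho.
  replace (k*h/2) with (2*(k*h/4)) by field. rewrite cos_2a. fold c s.
  set (X := (1 + rho) / 2 * q * s + (m - 1) * c).
  destruct (Req_dec (c*c - s*s) 0) as [H1|H1]. { rewrite H1; ring. }
  destruct (Req_dec s 0) as [H2|H2]. { rewrite H2; ring. }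
  destruct (Req_dec X 0) as [H3|H3]. { rewrite H3; ring. }
  exfalso.
  assert (Ha : C*s + 2*D*s*c + E*(c*c-s*s) = c*(A * s + D * s + E * c) - s*(A * c - C - D * c + E * s)) by ring.
  rewrite E1, E2 in Ha.
  assert (Hb : C*s + 2*D*s*c - E*(c*c-s*s) = s*(C + D * c + E * s - B * c) - c*(- (D * s) + E * c - B * s)) by ring.
  rewrite E3, E4 in Hb.
  assert (HE : E = 0).
  { assert (Hm : (2*E)*(c*c-s*s) = 0) by lra. apply Rmult_integral in Hm. destruct Hm; lra. }
  subst E.
  assert (E2' : A*s + D*s = 0) by lra.
  assert (Ha' : C*s + 2*D*s*c = 0) by lra.
  assert (Hk : -2*D*s*X = s*(rho*q*A*s - C - q*D*s + m*C) - rho*q*s*(A*s + D*s) + (1-m)*(C*s + 2*D*s*c)).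
  { unfold X. field. }
  rewrite E5, E2', Ha' in Hk.
  assert (HD : D = 0).
  { assert (Hm : D * (-2 * s * X) = 0) by lra. apply Rmult_integral in Hm. destruct Hm as [|Hm]; auto.
    exfalso. apply Rmult_integral in Hm. destruct Hm as [Hm|Hm]; [apply Rmult_integral in Hm; destruct Hm; lra | auto]. }
  subst D.
  assert (HC : C = 0). { assert (Hm : C * s = 0) by lra. apply Rmult_integral in Hm. destruct Hm; auto. contradiction. }
  assert (HA : A = 0). { assert (Hm : A * s = 0) by lra. apply Rmult_integral in Hm. destruct Hm; auto. contradiction. }
  assert (HB : B = 0). { assert (Hm : B * s = 0) by lra. apply Rmult_integral in Hm. destruct Hm; auto. contradiction. }
  subst A B C.
  assert (Hz : forall y, -h <= y <= h -> phi y = 0).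
  { intros y Hy.
    destruct (Rlt_dec (Rabs y) (h/4)) as [Hy1|Hy1]. { rewrite hcore by auto. ring. }
    apply Rnot_lt_le in Hy1. unfold Rabs in Hy1. destruct (Rcase_abs y).
    - destruct (Rle_dec (-y) (3*h/4)).
      + rewrite hactL by lra. ring.
      + rewrite hbufL by lra. ring.
    - destruct (Rle_dec y (3*h/4)).
      + rewrite hactR by lra. ring.
      + rewrite hbufR by lra. ring. }
  destruct hnz as [x Hx]. apply Hx.
  destruct (archimed ((x + h) / (2 * h))) as [Ha1 Ha2].
  set (n := up ((x + h) / (2 * h))) in *.
  set (u := (x + h) / (2 * h)) in *.
  assert (Hu : x + h = 2 * h * u) by (unfold u; field; lra).
  replace x with ((x - IZR (n - 1) * (2*h)) + IZR (n - 1) * (2*h)) by ring.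
  rewrite (per_Z phi (2*h) Hperphi (n - 1)%Z (x - IZR (n - 1) * (2*h))).
  rewrite minus_IZR. apply Hz. split; nra.
Qed.
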